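(* Let $g>0$, $\ell>0$, $p_0<p_1<0$, $[\![\rho]\!]<0$ and a vorticity strength function $\gamma$ be given. If $\Gamma_{\mathrm{rel}}:[p_1,0]\to(0,\infty)$ satisfies the compatibility condition $$\partial_p\big(\Gamma_{\mathrm{rel}}(p)^2\big)=2\gamma(-p),\qquad \ell=\int_{p_1}^0\frac{dp}{\Gamma_{\mathrm{rel}}(p)},$$ then there exists a one-parameter family $\{(H(\cdot;\lambda),Q(\lambda)):\lambda>0\}$ of solutions to the laminar flow problem with $H_p>0$, each member having prescribed relative circulation $\Gamma_{\mathrm{rel}}$ (i.e. $H_p^{-1}=\Gamma_{\mathrm{rel}}$ on $[p_1,0]$). Explicitly $$H(p;\lambda)=\begin{cases}\displaystyle\int_{p_1}^p\frac{dr}{\Gamma_{\mathrm{rel}}(r)}+\frac{p_1-p_0}{\lambda}, & p_1<p<0,\\[2mm]\dfrac{p-p_0}{\lambda}, & p_0<p<p_1,\end{cases}\qquad Q(\lambda)=\frac{2g[\![\rho]\!](p_1-p_0)}{\lambda}+\Gamma_{\mathrm{rel}}(p_1)^2-\lambda^2 .$$ The depth of the fluid at parameter $\lambda$ is $d(\lambda)=H(p_1;\lambda)=\dfrac{p_1-p_0}{\lambda}$ and the width of the channel is $W(\lambda)=\ell+d(\lambda)$.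
   Context: Laminar flow problem: find $Q\in\mathbb R$ and $H\in C([p_0,0])$, $C^2$ on $[p_0,p_1]$ and on $[p_1,0]$, with $H_{pp}=0$ on $(p_0,p_1)$; $H_{pp}=-\gamma(-p)H_p^3$ on $(p_1,0)$; $[\![H_p^{-2}]\!]+2g[\![\rho]\!]H(p_1)-Q=0$; $H(0)=\ell+d(H)$ with $d(H)=H(p_1)$; $H(p_0)=0$. Here $[\![f]\!]=f(p_1^+)-f(p_1^-)$, $[\![\rho]\!]=\rho_{\mathrm{air}}-\rho_{\mathrm{water}}$, $g$ the gravitational constant, and $\gamma$ a given smooth real function (vorticity strength function of the air). *)

(* Defs.v *)
From Stdlib Require Import Reals.
From Coquelicot Require Export Coquelicot.
From Stdlib Require Export Reals.
Open Scope R_scope.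

Definition Icc (a b : R) : R -> Prop := fun x => a <= x <= b.

(* f is C^2 on the closed interval [a,b], with first derivative f1 and second
   derivative f2 (derivatives taken relative to [a,b], i.e. one-sided at the
   endpoints), and f2 continuous on [a,b]. *)
Definition C2_on (a b : R) (f f1 f2 : R -> R) : Prop :=
  forall x, a <= x <= b ->
    D_in f f1 (Icc a b) x /\ D_in f1 f2 (Icc a b) x /\ continue_in f2 (Icc a b) x.

Definition smooth (f : R -> R) : Prop :=
  exists D : nat -> R -> R, D O = f /\
    forall n x, derivable_pt_lim (D n) x (D (S n) x).

(* The laminar flow problem, with the one-sided derivatives of H on the two
   pieces [p0,p1] (HL1, HL2) and [p1,0] (HR1, HR2) made explicit.
   rho_jump stands for [[rho]] = rho_air - rho_water. *)
Definition laminar_solution (g rho_jump ell : R) (gamma : R -> R) (p0 p1 : R)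
    (H : R -> R) (Q : R) (HL1 HL2 HR1 HR2 : R -> R) : Prop :=
  (forall x, p0 <= x <= 0 -> continue_in H (Icc p0 0) x) /\
  C2_on p0 p1 H HL1 HL2 /\
  C2_on p1 0 H HR1 HR2 /\
  (forall p, p0 < p < p1 -> HL2 p = 0) /\
  (forall p, p1 < p < 0 -> HR2 p = - gamma (- p) * (HR1 p) ^ 3) /\
  (/ (HR1 p1) ^ 2 - / (HL1 p1) ^ 2) + 2 * g * rho_jump * H p1 - Q = 0 /\
  H 0 = ell + H p1 /\
  H p0 = 0.

Definition H_lam (Gamma : R -> R) (p0 p1 lam : R) (p : R) : R :=
  if Rle_dec p p1 then (p - p0) / lam
  else RInt (fun r => / Gamma r) p1 p + (p1 - p0) / lam.

Definition Q_lam (g rho_jump : R) (Gamma : R -> R) (p0 p1 lam : R) : R :=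
  2 * g * rho_jump * (p1 - p0) / lam + (Gamma p1) ^ 2 - lam ^ 2.

(* Main.v *)
Require Import Defs.
From Stdlib Require Import Reals Lra.
From Coquelicot Require Import Coquelicot.
Open Scope R_scope.

Lemma lim_sub f D D' l x : limit1_in f D l x -> (forall y, D' y -> D y) -> limit1_in f D' l x.
Proof.
  unfold limit1_in, limit_in; intros H HD eps He.
  destruct (H eps He) as [a [Ha Hb]]. exists a; split; auto.
  intros y [Hy1 Hy2]; apply Hb; split; auto.
Qed.

Lemma lim_ext f g D l x : limit1_in f D l x -> (forall y, D y -> f y = g y) -> limit1_in g D l x.
Proof.
  unfold limit1_in, limit_in; intros H HD eps He.
  destruct (H eps He) as [a [Ha Hb]]. exists a; split; auto.
  intros y [Hy1 Hy2]; rewrite <- HD by auto; apply Hb; split; auto.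
Qed.

Lemma Din_ext f g d D x : D_in f d D x -> D x -> (forall y, D y -> f y = g y) -> D_in g d D x.
Proof.
  unfold D_in; intros H Hx HD. apply lim_ext with (1:=H).
  intros y [Hy _]. rewrite !HD; auto.
Qed.

Lemma Din_dext f d d' D x : D_in f d D x -> d x = d' x -> D_in f d' D x.
Proof. unfold D_in; intros H E; rewrite <- E; exact H. Qed.

Lemma Din_of_lim f l x D : derivable_pt_lim f x l -> D_in f (fun _ => l) D x.
Proof.
  intros H.
  assert (H1 : D_in f (fun _ => l) no_cond x).
  { apply (derive_pt_D_in f (fun _ => l) x (exist _ l H)). reflexivity. }
  unfold D_in in *. apply lim_sub with (1:=H1). intros y [_ Hy]; split; [exact I|exact Hy].
Qed.

Lemma cont_sub f D x : continuity_pt f x -> continue_in f D x.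
Proof.
  unfold continuity_pt, continue_in; intros H; apply lim_sub with (1:=H).
  intros y [_ Hy]; split; [exact I|exact Hy].
Qed.

Lemma sqrt_cont (G : R -> R) D x : (forall y, D y -> 0 < G y) -> D x ->
  continue_in (fun r => G r ^ 2) D x -> continue_in G D x.
Proof.
  unfold continue_in, limit1_in, limit_in; simpl; unfold Rdist.
  intros Hpos Hx H eps He.
  destruct (H (eps * G x)) as [a [Ha Hb]].
  { apply Rmult_lt_0_compat; auto. }
  exists a; split; auto. intros y [[Hy Hyx] Hya].
  specialize (Hb y (conj (conj Hy Hyx) Hya)).
  pose proof (Hpos y Hy); pose proof (Hpos x Hx).
  apply Rmult_lt_reg_r with (G y + G x); [lra|].
  rewrite <- (Rabs_pos_eq (G y + G x)) by lra. rewrite <- Rabs_mult.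
  replace ((G y - G x) * (G y + G x)) with (G y ^ 2 - G x ^ 2) by ring.
  apply Rlt_le_trans with (1 := Hb). rewrite Rabs_pos_eq by lra. nra.
Qed.

Lemma clamp_lip a b x y : a <= b ->
  Rabs (Rmax a (Rmin y b) - Rmax a (Rmin x b)) <= Rabs (y - x).
Proof.
  intros hab. unfold Rmax, Rmin.
  repeat destruct Rle_dec; unfold Rabs; repeat destruct Rcase_abs; lra.
Qed.

Lemma clamp_cont (f : R -> R) a b x : a <= b ->
  (forall y, a <= y <= b -> continue_in f (Icc a b) y) ->
  continuity_pt (fun t => f (Rmax a (Rmin t b))) x.
Proof.
  intros hab Hc.
  set (c := Rmax a (Rmin x b)).
  assert (Hcin : a <= c <= b) by (unfold c, Rmax, Rmin; repeat destruct Rle_dec; lra).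
  specialize (Hc c Hcin).
  unfold continuity_pt, continue_in, limit1_in, limit_in in *; simpl in *; unfold Rdist in *.
  intros eps He. destruct (Hc eps He) as [d [Hd Hb]].
  exists d; split; auto. intros y [_ Hy].
  set (c' := Rmax a (Rmin y b)).
  assert (Hc'in : a <= c' <= b) by (unfold c', Rmax, Rmin; repeat destruct Rle_dec; lra).
  destruct (Req_dec c' c) as [E|E].
  - fold c'. rewrite E. unfold Rminus; rewrite Rplus_opp_r, Rabs_R0; lra.
  - apply Hb. split.
    + split; [exact Hc'in| intro; apply E; auto].
    + pose proof (clamp_lip a b x y hab). fold c c' in H. lra.
Qed.

Lemma inv_deriv (G : R -> R) dG2 D x : (forall y, D y -> 0 < G y) -> D x ->
  D_in (fun r => G r ^ 2) dG2 D x -> continue_in G D x ->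
  D_in (fun r => / G r) (fun r => - dG2 r / (2 * G r ^ 3)) D x.
Proof.
  intros Hpos Hx Hd Hc.
  pose proof (Hpos x Hx) as Gx.
  unfold continue_in in Hc.
  pose proof (limit_mul G (fun _ => G x) _ _ _ x Hc (limit_free G (D_x D x) x x)) as h1.
  pose proof (limit_plus G (fun _ => G x) _ _ _ x Hc (limit_free G (D_x D x) x x)) as h2.
  pose proof (limit_mul _ _ _ _ _ x h1 h2) as h3.
  assert (Hne : G x * G x * (G x + G x) <> 0).
  { apply Rgt_not_eq. apply Rmult_lt_0_compat; [apply Rmult_lt_0_compat|]; lra. }
  pose proof (limit_inv _ _ _ x h3 Hne) as h4.
  pose proof (limit_Ropp _ _ _ x h4) as h5.
  unfold D_in in *.
  pose proof (limit_mul _ _ _ _ _ x Hd h5) as h6.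
  replace (- dG2 x / (2 * G x ^ 3)) with (dG2 x * - / (G x * G x * (G x + G x))).
  2:{ field. lra. }
  apply lim_ext with (1:=h6).
  intros y [Hy Hyx]. pose proof (Hpos y Hy).
  cbv beta. field; repeat split; try lra; try (intro E; apply Hyx; lra).
Qed.

Theorem lemma4p2 (g ell p0 p1 rho_jump : R) (gamma Gamma : R -> R) :
  0 < g -> 0 < ell -> p0 < p1 -> p1 < 0 -> rho_jump < 0 ->
  smooth gamma ->
  (forall p, p1 <= p <= 0 -> 0 < Gamma p) ->
  (forall p, p1 <= p <= 0 ->
     D_in (fun r => (Gamma r) ^ 2) (fun r => 2 * gamma (- r)) (Icc p1 0) p) ->
  ell = RInt (fun p => / Gamma p) p1 0 ->
  forall lam : R, 0 < lam ->
    exists HL1 HL2 HR1 HR2 : R -> R,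
      laminar_solution g rho_jump ell gamma p0 p1
        (H_lam Gamma p0 p1 lam) (Q_lam g rho_jump Gamma p0 p1 lam)
        HL1 HL2 HR1 HR2 /\
      (forall p, p0 <= p <= p1 -> 0 < HL1 p) /\
      (forall p, p1 <= p <= 0 -> 0 < HR1 p /\ / HR1 p = Gamma p) /\
      H_lam Gamma p0 p1 lam p1 = (p1 - p0) / lam /\
      H_lam Gamma p0 p1 lam 0 = ell + (p1 - p0) / lam.
Proof.
  intros Hg Hell Hp01 Hp1 Hrho Hsm HGpos HGd Hellv lam Hlam.
  assert (HGc : forall x, p1 <= x <= 0 -> continue_in Gamma (Icc p1 0) x).
  { intros x Hx. apply sqrt_cont.
    - intros y Hy; apply HGpos; exact Hy.
    - exact Hx.
    - eapply cont_deriv. apply HGd, Hx. }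
  assert (HGic : forall x, p1 <= x <= 0 -> continue_in (fun r => / Gamma r) (Icc p1 0) x).
  { intros x Hx. unfold continue_in. apply limit_inv. apply HGc, Hx.
    apply Rgt_not_eq, HGpos, Hx. }
  set (fe := fun t => / Gamma (Rmax p1 (Rmin t 0))).
  assert (Hfec : forall x, continuity_pt fe x).
  { intros x. apply (clamp_cont (fun r => / Gamma r)); [lra|]. exact HGic. }
  assert (Hfe_eq : forall t, p1 <= t <= 0 -> fe t = / Gamma t).
  { intros t Ht. unfold fe. f_equal. f_equal. unfold Rmax, Rmin.
    repeat destruct Rle_dec; lra. }
  set (F := fun y => RInt fe p1 y).
  assert (HF : forall y, is_derive F y (fe y)).
  { intros y. apply (is_derive_RInt fe F p1 y).
    - apply filter_forall. intros z. apply (RInt_correct fe p1 z), ex_RInt_continuous.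
      intros w _. apply (proj1 (continuity_pt_filterlim _ _)), Hfec.
    - apply (proj1 (continuity_pt_filterlim _ _)), Hfec. }
  set (c := (p1 - p0) / lam).
  set (H := H_lam Gamma p0 p1 lam).
  assert (HHl : forall y, y <= p1 -> H y = (y - p0) / lam).
  { intros y Hy. unfold H, H_lam. destruct Rle_dec; [reflexivity|lra]. }
  assert (HHr : forall y, p1 <= y <= 0 -> H y = F y + c).
  { intros y Hy. unfold H, H_lam, F, c. destruct Rle_dec.
    - assert (y = p1) by lra. subst y. rewrite RInt_point. unfold zero; simpl. ring.
    - f_equal. apply RInt_ext. intros z Hz.
      rewrite Rmin_left in Hz by lra. rewrite Rmax_right in Hz by lra.
      rewrite Hfe_eq by lra. reflexivity. }
  assert (HH1 : H p1 = c) by (rewrite HHl by lra; reflexivity).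
  assert (HH0 : H 0 = ell + c).
  { rewrite HHr by lra. unfold F. rewrite Hellv. f_equal. apply RInt_ext.
    intros z Hz. rewrite Rmin_left in Hz by lra. rewrite Rmax_right in Hz by lra.
    apply Hfe_eq; lra. }
  exists (fun _ => / lam), (fun _ => 0), (fun p => / Gamma p),
    (fun p => - gamma (- p) * (/ Gamma p) ^ 3).
  split; [|split; [|split; [|split]]].
  4: exact HH1.
  4: exact HH0.
  2: { intros; apply Rinv_0_lt_compat; exact Hlam. }
  2: { intros p Hp. split. apply Rinv_0_lt_compat, HGpos, Hp.
       apply Rinv_inv. }
  fold H.
  assert (Hgc : forall x, continuity_pt (fun p => gamma (- p)) x).
  { destruct Hsm as [Dn [HD0 HDs]]. intros x.
    apply (continuity_pt_comp (fun p => - p) gamma).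
    - apply continuity_pt_opp, continuity_pt_id.
    - apply derivable_continuous_pt. rewrite <- HD0.
      exists (Dn 1%nat (- x)). apply HDs. }
  unfold laminar_solution.
  split; [|split; [|split; [|split; [|split; [|split; [|split]]]]]].
  -
    intros x Hx.
    set (M := fun y => (y + p1 + Rabs (y - p1)) / 2).
    set (Hc := fun y => (y + p1 - M y - p0) * / lam + F (M y)).
    assert (HcE : forall y, p0 <= y <= 0 -> H y = Hc y).
    { intros y Hy. unfold Hc, M. destruct (Rle_dec y p1).
      - rewrite Rabs_left1 by lra. rewrite HHl by lra.
        replace ((y + p1 + - (y - p1)) / 2) with p1 by field.
        unfold F; rewrite RInt_point; unfold zero; simpl. field. lra.
      - rewrite Rabs_right by lra. rewrite HHr by lra.
        replace ((y + p1 + (y - p1)) / 2) with y by field.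
        unfold c. field. lra. }
    assert (Hcc : continuity_pt Hc x).
    { apply (continuity_pt_plus (fun y => (y + p1 - M y - p0) * / lam) (fun y => F (M y))).
      - unfold M; reg.
      - apply (continuity_pt_comp M F).
        + unfold M; reg.
        + apply (proj2 (continuity_pt_filterlim _ _)).
          apply (ex_derive_continuous (K:=R_AbsRing) (V:=R_NormedModule) F (M x)). exists (fe (M x)). apply HF. }
    pose proof (cont_sub _ (Icc p0 0) _ Hcc) as Hcs.
    unfold continue_in in *. rewrite HcE by exact Hx.
    apply lim_ext with (1 := Hcs). intros y [Hy _]. symmetry. apply HcE, Hy.
  -
    intros x Hx. split; [|split].
    + apply Din_ext with (f := fun p => (p - p0) / lam); [| exact Hx|].
      * apply Din_of_lim. apply is_derive_Reals. auto_derive; [exact I|]. field. lra.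
      * intros y Hy. symmetry. apply HHl. destruct Hy; lra.
    + apply Dconst.
    + unfold continue_in. apply (limit_free (fun _ => 0) _ 0).
  -
    intros x1 Hx1. rename x1 into x. rename Hx1 into Hx. split; [|split].
    + apply Din_dext with (d := fun _ => fe x).
      2: { apply Hfe_eq, Hx. }
      apply Din_ext with (f := fun y => F y + c); [|exact Hx|].
      * apply Din_of_lim.
        replace (fe x) with (fe x + 0) by ring.
        apply (derivable_pt_lim_plus F (fun _ => c)); [apply is_derive_Reals, HF | apply derivable_pt_lim_const].
      * intros y Hy. symmetry. apply HHr, Hy.
    + eapply Din_dext.
      * apply inv_deriv.
        -- intros y Hy; apply HGpos, Hy.
        -- exact Hx.
        -- apply HGd, Hx.
        -- apply HGc, Hx.
      * cbv beta. pose proof (HGpos x Hx). field. lra.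
    + unfold continue_in.
      assert (hg := cont_sub _ (Icc p1 0) _ (Hgc x)). unfold continue_in in hg.
      assert (hG := HGic x Hx). unfold continue_in in hG.
      pose proof (limit_Ropp _ _ _ _ hg) as a1.
      pose proof (limit_mul _ _ _ _ _ _ hG (limit_free (fun _ => 1) (D_x (Icc p1 0) x) x x)) as a2.
      pose proof (limit_mul _ _ _ _ _ _ hG a2) as a3.
      pose proof (limit_mul _ _ _ _ _ _ hG a3) as a4.
      pose proof (limit_mul _ _ _ _ _ _ a1 a4) as a5.
      cbv beta in a5. simpl. exact a5.
  - intros; reflexivity.
  - intros p Hp. reflexivity.
  - rewrite HH1. unfold Q_lam, c. field. split; [lra|].
    apply Rgt_not_eq, HGpos; lra.
  - rewrite HH1. exact HH0.
  - rewrite HHl by lra. unfold Rdiv; ring.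
Qed.
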